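(* Let $\preceq$ be a topological orientation on $\mathbb{R}$ (with the metric $d(x,y)=|x-y|$) such that $x\preceq y$ implies $x\le y$. Assume every left-bounded pair for $\preceq$ has a meet in $\mathbb{R}$. Then $(\mathbb{R},\preceq)$ is a cc sponge.
   Context: An orientation is a reflexive, antisymmetric binary relation; it is topological if it is a closed subset of $\mathbb{R}\times\mathbb{R}$. A set $P$ is left-bounded if some $s$ satisfies $s\preceq p$ for all $p\in P$, right-bounded if some $s$ satisfies $p\preceq s$ for all $p\in P$. The meet of $P$ is an $x$ with $x\preceq p$ for all $p\in P$ and $y\preceq x$ for every $y$ with $y\preceq p$ for all $p\in P$; the join is dual. $(\mathbb{R},\preceq)$ is a cc sponge if every nonempty right-bounded subset has a join. *)

(* Defs.v *)
From HB Require Import structures.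
From mathcomp Require Import all_boot all_order all_algebra.
From mathcomp Require Import all_classical all_reals all_analysis.
From mathcomp Require Import Rstruct Rstruct_topology.
From Stdlib Require Import Reals.

Set Implicit Arguments.
Unset Strict Implicit.
Unset Printing Implicit Defensive.

Local Open Scope classical_set_scope.

Definition Rreal := Rdefinitions.R.

Definition orientation (le : Rreal -> Rreal -> Prop) : Prop :=
  (forall x, le x x) /\ (forall x y, le x y -> le y x -> x = y).

Definition topological (le : Rreal -> Rreal -> Prop) : Prop :=
  closed [set p : Rreal * Rreal | le p.1 p.2].

Definition left_bounded (le : Rreal -> Rreal -> Prop) (P : set Rreal) : Prop :=
  exists s, forall p, P p -> le s p.

Definition right_bounded (le : Rreal -> Rreal -> Prop) (P : set Rreal) : Prop :=
  exists s, forall p, P p -> le p s.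

Definition is_meet (le : Rreal -> Rreal -> Prop) (P : set Rreal) (x : Rreal) : Prop :=
  (forall p, P p -> le x p) /\
  (forall y, (forall p, P p -> le y p) -> le y x).

Definition is_join (le : Rreal -> Rreal -> Prop) (P : set Rreal) (x : Rreal) : Prop :=
  (forall p, P p -> le p x) /\
  (forall y, (forall p, P p -> le p y) -> le x y).

Definition cc_sponge (le : Rreal -> Rreal -> Prop) : Prop :=
  forall P : set Rreal, P !=set0 -> right_bounded le P -> exists x, is_join le P x.

(* Main.v *)
Require Import Defs.
From mathcomp Require Import all_boot all_order all_algebra.
From mathcomp Require Import all_classical all_reals all_analysis.
From mathcomp Require Import Rstruct Rstruct_topology.
From Stdlib Require Import Reals.
Import Order.TTheory GRing.Theory Num.Theory.
Local Open Scope classical_set_scope.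
Local Open Scope ring_scope.

Lemma closed_pt (le : Rreal -> Rreal -> Prop) (p c : R) :
  topological le ->
  (forall e : R, (0 < e) -> exists u : R, le p u /\ (`|c - u| < e)) -> le p c.
Proof.
move=> cl H; apply: (cl (p, c)) => B /= hB.
move: hB => [[Q1 Q2] /= [h1 h2] sub].
move/nbhs_ballP: h2 => [e e0 be].
have [u [lpu cu]] := H e e0.
idtac.
exists (p, u); split => //; apply: sub; split => /=.
  exact: nbhs_singleton.
apply: be. exact: cu.
Qed.

Theorem mainTheorem5 (le : Rreal -> Rreal -> Prop) :
  orientation le ->
  topological le ->
  (forall x y : Rreal, le x y -> Rle x y) ->
  (forall a b : Rreal, left_bounded le [set a; b] ->
     exists m, is_meet le [set a; b] m) ->
  cc_sponge le.
Proof.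
move=> [refl anti] cl hle hmeet P [p0 Pp0] [s Hs].
have hle' : forall x y : R, le x y -> x <= y by move=> x y /hle/RleP.
pose U := [set u : R | forall p, P p -> le p u].
have Us : U s by [].
have Ulb : lbound U p0 by move=> u Uu; apply: hle'; exact: Uu.
have hinf : has_inf U by split; [exists s | exists p0].
pose c := inf U.
have Uc : U c.
  move=> p Pp; apply: (@closed_pt le p c cl) => e e0.
  have [u Uu ue] := inf_adherent e0 hinf.
  exists u; split; first exact: Uu.
  have := ge_inf (proj2 hinf) Uu; rewrite -/c => cu.
  rewrite distrC ger0_norm ?subr_ge0 //.
  rewrite ltrBlDl addrC.
  by rewrite addrC.
exists c; split; first exact: Uc.
move=> y Hy.
have Uy : U y by [].
have [m [mlb mglb]] : exists m, is_meet le [set c; y] m.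
  apply: hmeet; exists p0 => q [->|->]; [exact: Uc | exact: Uy].
have Um : U m.
  move=> p Pp; apply: mglb => q [->|->]; [exact: Uc | exact: Uy].
have cm : c <= m by exact: (ge_inf (proj2 hinf) Um).
have mc : m <= c by apply: hle'; apply: mlb; left.
have -> : c = m by apply/eqP; rewrite eq_le cm mc.
by apply: mlb; right.
Qed.
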